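(* No multiple zeta-star value $\zeta^{\star}(k_1,\ldots,k_r)$ (with $r\geq1$, $k_1\geq2$, $k_2,\ldots,k_r\geq1$ integers) is an integer.
   Context: $\zeta^{\star}(k_1,\ldots,k_r)=\sum_{n_1\geq n_2\geq\cdots\geq n_r\geq 1}\frac{1}{n_1^{k_1}\cdots n_r^{k_r}}$. *)

(* Defs.v *)
From Stdlib Require Import Reals List.
From Coquelicot Require Import Coquelicot.
Open Scope R_scope.

(* zs_tail ks n = sum over n >= n_2 >= ... >= n_r >= 1 of
   1 / (n_2^{k_2} ... n_r^{k_r}), where ks = [k_2; ...; k_r].
   For ks = [] this is the empty product 1. *)
Fixpoint zs_tail (ks : list nat) (n : nat) : R :=
  match ks with
  | nil => 1
  | k :: ks' =>
      match n with
      | O => 0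
      | S m => sum_f_R0 (fun j => / (INR (S j)) ^ k * zs_tail ks' (S j)) m
      end
  end.

(* The term of index n (n >= 0 corresponds to n_1 = n+1) of the series
   defining zeta^star(k1, ks). *)
Definition zeta_star_term (k1 : nat) (ks : list nat) (n : nat) : R :=
  / (INR (S n)) ^ k1 * zs_tail ks (S n).

Definition zeta_star (k1 : nat) (ks : list nat) : R :=
  Series (zeta_star_term k1 ks).

(* Main.v *)
Require Import Defs.
From Stdlib Require Import Reals List ZArith Lra Lia.
From Coquelicot Require Import Coquelicot.
Open Scope R_scope.

Definition one : nat -> R := fun _ => 1.
Fixpoint Aop (e : nat) (g : nat -> R) (n : nat) : R :=
  match n with O => 0 | S m => Aop e g m + g (S m) / INR (S m) ^ e end.
Definition Fw (w : list nat) : nat -> R := fold_right Aop one w.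

Lemma Aop_S e g m : Aop e g (S m) = Aop e g m + g (S m) / INR (S m) ^ e.
Proof. reflexivity. Qed.

Lemma Aop_1 e g : Aop e g 1 = g 1%nat.
Proof. rewrite Aop_S. change (INR 1) with 1. rewrite pow1. simpl Aop. field. Qed.

Lemma Aop_2 e g : Aop e g 2 = g 1%nat + g 2%nat / 2 ^ e.
Proof. rewrite Aop_S, Aop_1. simpl INR. replace (1+1) with 2 by ring. reflexivity. Qed.

Lemma INR_S_pos m : 0 < INR (S m).
Proof. apply lt_0_INR. lia. Qed.

Lemma Aop_ext e g h n : (forall k, (1 <= k)%nat -> g k = h k) -> Aop e g n = Aop e h n.
Proof. intros H; induction n; [reflexivity|]. rewrite !Aop_S, IHn, H by lia. reflexivity. Qed.

Lemma Aop_mono e g h n : (forall k, (1 <= k)%nat -> g k <= h k) -> Aop e g n <= Aop e h n.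
Proof.
  intros H; induction n; [simpl; lra|]. rewrite !Aop_S.
  apply Rplus_le_compat; auto. unfold Rdiv. apply Rmult_le_compat_r.
  - left. apply Rinv_0_lt_compat, pow_lt, INR_S_pos.
  - apply H; lia.
Qed.

Lemma Aop_nonneg e g n : (forall k, (1 <= k)%nat -> 0 <= g k) -> 0 <= Aop e g n.
Proof.
  intros H; induction n; [simpl; lra|]. rewrite Aop_S.
  assert (0 <= g (S n) / INR (S n) ^ e).
  { unfold Rdiv. apply Rmult_le_pos; [apply H; lia|]. left. apply Rinv_0_lt_compat, pow_lt, INR_S_pos. }
  lra.
Qed.

Lemma Aop_incr e g n : (forall k, (1 <= k)%nat -> 0 <= g k) -> Aop e g n <= Aop e g (S n).
Proof.
  intros H. rewrite Aop_S.
  assert (0 <= g (S n) / INR (S n) ^ e).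
  { unfold Rdiv. apply Rmult_le_pos; [apply H; lia|]. left. apply Rinv_0_lt_compat, pow_lt, INR_S_pos. }
  lra.
Qed.

Lemma Aop_incr_le e g n m : (forall k, (1 <= k)%nat -> 0 <= g k) -> (n <= m)%nat -> Aop e g n <= Aop e g m.
Proof.
  intros H Hnm. induction Hnm; [lra|]. eapply Rle_trans; [apply IHHnm| apply Aop_incr; auto].
Qed.

Lemma Aop_ge1 e g n : (forall k, (1 <= k)%nat -> 0 <= g k) -> 1 <= g 1%nat -> (1 <= n)%nat -> 1 <= Aop e g n.
Proof.
  intros H H1 Hn. eapply Rle_trans; [|apply (Aop_incr_le e g 1 n); auto].
  rewrite Aop_1. auto.
Qed.

Lemma Aop_exp_mono e e' g n : (forall k, (1 <= k)%nat -> 0 <= g k) -> (e <= e')%nat ->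
  Aop e' g n <= Aop e g n.
Proof.
  intros H He; induction n; [simpl; lra|]. rewrite !Aop_S.
  apply Rplus_le_compat; auto. unfold Rdiv. apply Rmult_le_compat_l; [apply H; lia|].
  apply Rinv_le_contravar; [apply pow_lt, INR_S_pos|].
  apply Rle_pow; [|exact He]. rewrite S_INR. pose proof (pos_INR n). lra.
Qed.

Lemma Aop_shift e g n : (forall k, (1 <= k)%nat -> g k = INR k) -> Aop (S e) g n = Aop e one n.
Proof.
  intros H; induction n; [reflexivity|]. rewrite !Aop_S, IHn, H by lia. unfold one.
  replace (INR (S n) ^ S e) with (INR (S n) * INR (S n) ^ e) by reflexivity.
  pose proof (INR_S_pos n). pose proof (pow_lt _ e H0). field. lra.
Qed.

Lemma Aop_id g n : (forall k, (1 <= k)%nat -> g k = INR k) -> Aop 1 g n = INR n.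
Proof.
  intros H; induction n; [reflexivity|]. rewrite !Aop_S, IHn, H by lia.
  pose proof (INR_S_pos n). rewrite pow_1. rewrite (S_INR n) in *. field. lra.
Qed.
Lemma F_cons e w : Fw (e :: w) = Aop e (Fw w).
Proof. reflexivity. Qed.

Lemma F_1 w : Fw w 1%nat = 1.
Proof. destruct w; [reflexivity|]. rewrite F_cons, Aop_1. induction w; [reflexivity|]. rewrite F_cons, Aop_1. auto. Qed.

Lemma F_ge1 w n : (1 <= n)%nat -> 1 <= Fw w n.
Proof.
  revert n; induction w; intros n Hn; [unfold Fw; simpl; unfold one; lra|].
  rewrite F_cons. apply Aop_ge1; [intros k Hk; specialize (IHw k Hk); lra | apply IHw; lia | exact Hn].
Qed.

Lemma F_nonneg w n : (1 <= n)%nat -> 0 <= Fw w n.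
Proof. intros H. pose proof (F_ge1 w n H) as HH. lra. Qed.

Lemma F_le_id w n : List.Forall (fun k => (1 <= k)%nat) w -> (1 <= n)%nat -> Fw w n <= INR n.
Proof.
  intros Hw; revert n; induction Hw as [|e w He Hw IH]; intros n Hn.
  - unfold Fw; simpl; unfold one. apply (le_INR 1) in Hn. simpl in Hn. lra.
  - rewrite F_cons. eapply Rle_trans; [apply Aop_exp_mono; [apply F_nonneg|exact He]|].
    rewrite <- (Aop_id INR n) by auto. apply Aop_mono. auto.
Qed.

Lemma F_2_lt w : List.Forall (fun k => (1 <= k)%nat) w -> Fw w 2%nat < 2.
Proof.
  intros Hw; induction Hw as [|e w He Hw IH].
  - unfold Fw; simpl; unfold one; lra.
  - rewrite F_cons, Aop_2, F_1.
    assert (2 <= 2 ^ e). { replace 2 with (2 ^ 1) at 1 by ring. apply Rle_pow; lra || lia. }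
    assert (Fw w 2%nat / 2 ^ e < 1).
    { apply (Rmult_lt_reg_r (2^e)); [lra|]. unfold Rdiv. rewrite Rmult_assoc, Rinv_l by lra. nra. }
    lra.
Qed.

Fixpoint iter1 (i : nat) (g : nat -> R) : nat -> R :=
  match i with O => g | S i' => Aop 1 (iter1 i' g) end.

Lemma iter1_1 i g : iter1 i g 1%nat = g 1%nat.
Proof. induction i; [reflexivity|]. cbn [iter1]. rewrite Aop_1. auto. Qed.

Lemma iter1_mono i g h n : (forall k, (1 <= k)%nat -> g k <= h k) -> (1 <= n)%nat -> iter1 i g n <= iter1 i h n.
Proof.
  intros H; revert n; induction i; intros n Hn; simpl; auto. apply Aop_mono. auto.
Qed.

Lemma iter1_nonneg i g n : (forall k, (1 <= k)%nat -> 0 <= g k) -> (1 <= n)%nat -> 0 <= iter1 i g n.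
Proof. intros H; revert n; induction i; intros n Hn; simpl; auto. apply Aop_nonneg. auto. Qed.

Lemma iter1_ge1 i g n : (forall k, (1 <= k)%nat -> 1 <= g k) -> (1 <= n)%nat -> 1 <= iter1 i g n.
Proof.
  intros H; revert n; induction i; intros n Hn; cbn [iter1]; auto.
  apply Aop_ge1; [intros k Hk; specialize (IHi k Hk); lra| apply IHi; lia| exact Hn].
Qed.

Lemma iter1_le_id i g n : (forall k, (1 <= k)%nat -> g k <= INR k) -> (1 <= n)%nat -> iter1 i g n <= INR n.
Proof.
  intros H; revert n; induction i; intros n Hn; simpl; auto.
  rewrite <- (Aop_id INR n) by auto. apply Aop_mono. auto.
Qed.

Lemma iter1_2_lt i g : g 1%nat = 1 -> g 2%nat < 2 -> iter1 i g 2%nat < 2.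
Proof.
  intros H1 H2; induction i; cbn [iter1]; auto. rewrite Aop_2, iter1_1, H1. lra.
Qed.

Lemma iter1_F i w : forall n, iter1 i (Fw w) n = Fw (repeat 1%nat i ++ w) n.
Proof. induction i; intros n; [reflexivity|]. cbn [iter1 repeat app]. rewrite F_cons. apply Aop_ext. intros; auto. Qed.

Definition Bop (j : nat) (g : nat -> R) : nat -> R := Aop 2 (iter1 j g).
Fixpoint Biter (j q : nat) (g : nat -> R) : nat -> R :=
  match q with O => g | S q' => Bop j (Biter j q' g) end.
Fixpoint sumc (j : nat) (g : nat -> R) (n : nat) : R :=
  match j with O => 0 | S j' => sumc j' g n + iter1 (S j') g n end.
Fixpoint Rs (d : nat -> R) (n : nat) : R :=
  match n with
  | O => 0
  | S m => Rs d m + match m with O => 0 | _ => d (S m) / (INR (S m) * INR m) end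
  end.

Lemma sumc_1 j g : sumc j g 1%nat = INR j * g 1%nat.
Proof.
  induction j; [simpl; ring|]. cbn [sumc]. rewrite IHj, iter1_1, S_INR. ring.
Qed.

Lemma sumc_step j g n :
  sumc j g (S n) - sumc j g n = (sumc j g (S n) - iter1 j g (S n) + g (S n)) / INR (S n).
Proof.
  pose proof (INR_S_pos n) as Hp.
  induction j.
  - cbn [sumc iter1]. field. lra.
  - cbn [sumc]. change (iter1 (S j) g) with (Aop 1 (iter1 j g)).
    rewrite (Aop_S 1 _ n).
    replace (sumc j g (S n) + (Aop 1 (iter1 j g) n + iter1 j g (S n) / INR (S n) ^ 1) -
      (sumc j g n + Aop 1 (iter1 j g) n)) with
      ((sumc j g (S n) - sumc j g n) + iter1 j g (S n) / INR (S n) ^ 1) by ring.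
    rewrite IHj. rewrite pow_1. field. lra.
Qed.

Lemma invariant j g n : (1 <= n)%nat ->
  Bop j g n + (Bop j g n + sumc j g n) / INR n =
  INR (j + 2) * g 1%nat + Rs (fun k => g k - Bop j g k) n.
Proof.
  intros Hn. induction Hn as [|n Hn IH].
  - unfold Bop. rewrite Aop_1, iter1_1, sumc_1. simpl Rs. change (INR 1) with 1.
    rewrite plus_INR. simpl (INR 2). field.
  - cbn [Rs]. destruct n as [|n']; [lia|].
    set (N := S n') in *.
    pose proof (sumc_step j g N) as Hs.
    assert (HN : 0 < INR N) by (apply lt_0_INR; unfold N; lia).
    pose proof (INR_S_pos N) as HN1.
    rewrite <- Rplus_assoc, <- IH.
    assert (HB : Bop j g (S N) = Bop j g N + iter1 j g (S N) / INR (S N) ^ 2) by reflexivity.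
    rewrite HB.
    rewrite (S_INR N) in *.
    assert (Hs' : sumc j g N = sumc j g (S N) - (sumc j g (S N) - iter1 j g (S N) + g (S N)) / (INR N + 1)) by lra.
    rewrite Hs'. field. lra.
Qed.

Lemma Bop_1 j g : Bop j g 1%nat = g 1%nat.
Proof. unfold Bop. rewrite Aop_1, iter1_1. reflexivity. Qed.

Lemma Biter_1 j q g : Biter j q g 1%nat = g 1%nat.
Proof. induction q; [reflexivity|]. cbn [Biter]. rewrite Bop_1. auto. Qed.

Lemma Bop_mono j g h n : (forall k, (1 <= k)%nat -> g k <= h k) -> Bop j g n <= Bop j h n.
Proof. intros H. unfold Bop. apply Aop_mono. intros; apply iter1_mono; auto. Qed.

Lemma Bop_nonneg j g n : (forall k, (1 <= k)%nat -> 0 <= g k) -> 0 <= Bop j g n.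
Proof. intros H. unfold Bop. apply Aop_nonneg. intros; apply iter1_nonneg; auto. Qed.

Lemma Biter_nonneg j q g n : (forall k, (1 <= k)%nat -> 0 <= g k) -> (1 <= n)%nat -> 0 <= Biter j q g n.
Proof.
  intros H; revert n; induction q; intros n Hn; cbn [Biter]; auto. apply Bop_nonneg. auto.
Qed.

Lemma Biter_mono j q g h n : (forall k, (1 <= k)%nat -> g k <= h k) -> (1 <= n)%nat -> Biter j q g n <= Biter j q h n.
Proof.
  intros H; revert n; induction q; intros n Hn; cbn [Biter]; auto. apply Bop_mono. auto.
Qed.

Lemma Aop_strict2 e g h : (forall k, (1 <= k)%nat -> g k <= h k) -> g 2%nat < h 2%nat -> Aop e g 2%nat < Aop e h 2%nat.
Proof.
  intros H H2. rewrite !Aop_2. assert (g 1%nat <= h 1%nat) by (apply H; lia).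
  assert (0 < 2 ^ e) by (apply pow_lt; lra).
  assert (g 2%nat / 2 ^ e < h 2%nat / 2 ^ e). { unfold Rdiv. apply Rmult_lt_compat_r; [apply Rinv_0_lt_compat; lra| lra]. }
  lra.
Qed.

Lemma iter1_strict2 i g h : (forall k, (1 <= k)%nat -> g k <= h k) -> g 2%nat < h 2%nat -> iter1 i g 2%nat < iter1 i h 2%nat.
Proof.
  intros H H2. induction i; cbn [iter1]; auto. apply Aop_strict2; auto.
  intros; apply iter1_mono; auto.
Qed.

Lemma Bop_strict2 j g h : (forall k, (1 <= k)%nat -> g k <= h k) -> g 2%nat < h 2%nat -> Bop j g 2%nat < Bop j h 2%nat.
Proof.
  intros H H2. unfold Bop. apply Aop_strict2; [intros; apply iter1_mono; auto|]. apply iter1_strict2; auto.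
Qed.

Lemma Biter_one_ge1 j q n : (1 <= n)%nat -> 1 <= Biter j q one n.
Proof.
  revert n; induction q; intros n Hn; cbn [Biter]; [unfold one; lra|].
  unfold Bop. apply Aop_ge1; [| |exact Hn].
  - intros k Hk. apply iter1_nonneg; [|exact Hk]. intros. specialize (IHq k0 H). lra.
  - rewrite iter1_1. apply IHq. lia.
Qed.

Lemma Biter_one_incr j q n : (1 <= n)%nat -> Biter j q one n <= Biter j (S q) one n.
Proof.
  revert n; induction q; intros n Hn.
  - cbn [Biter]. apply (Biter_one_ge1 j 1 n Hn).
  - cbn [Biter]. apply Bop_mono. intros; apply IHq; auto.
Qed.

Lemma Biter_one_strict j q : Biter j q one 2%nat < Biter j (S q) one 2%nat.
Proof.
  induction q.
  - cbn [Biter]. unfold Bop. rewrite Aop_2, iter1_1. change (one 1%nat) with 1. change (one 2%nat) with 1.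
    assert (0 <= iter1 j one 2%nat) by (apply iter1_nonneg; [unfold one; intros; lra| lia]).
    assert (1 <= iter1 j one 2%nat) by (apply iter1_ge1; [unfold one; intros; lra| lia]).
    simpl pow. lra.
  - change (Bop j (Biter j q one) 2%nat < Bop j (Biter j (S q) one) 2%nat).
    apply Bop_strict2; auto. intros; apply Biter_one_incr; auto.
Qed.

Lemma Rs_2 d : Rs d 2%nat = d 2%nat / 2.
Proof. simpl Rs. change (INR 2) with 2. change (INR 1) with 1. field. Qed.

Lemma Rs_SS d m : Rs d (S (S m)) = Rs d (S m) + d (S (S m)) / (INR (S (S m)) * INR (S m)).
Proof. reflexivity. Qed.

Lemma Rs_le2 d n : (forall k, (3 <= k)%nat -> d k <= 0) -> (2 <= n)%nat -> Rs d n <= Rs d 2%nat.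
Proof.
  intros H Hn. induction Hn; [lra|]. destruct m as [|m]; [lia|]. rewrite (Rs_SS d m).
  assert (d (S (S m)) / (INR (S (S m)) * INR (S m)) <= 0).
  { unfold Rdiv. apply Rmult_le_0_r; [apply H; lia|]. left. apply Rinv_0_lt_compat, Rmult_lt_0_compat; apply INR_S_pos. }
  lra.
Qed.

Lemma Rs_ge2 d n : (forall k, (3 <= k)%nat -> 0 <= d k) -> (2 <= n)%nat -> Rs d 2%nat <= Rs d n.
Proof.
  intros H Hn. induction Hn; [lra|]. destruct m as [|m]; [lia|]. rewrite (Rs_SS d m).
  assert (0 <= d (S (S m)) / (INR (S (S m)) * INR (S m))).
  { unfold Rdiv. apply Rmult_le_pos; [apply H; lia|]. left. apply Rinv_0_lt_compat, Rmult_lt_0_compat; apply INR_S_pos. }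
  lra.
Qed.

Lemma sumc_nonneg j g n : (forall k, (1 <= k)%nat -> 0 <= g k) -> (1 <= n)%nat -> 0 <= sumc j g n.
Proof.
  intros H Hn. induction j; cbn [sumc]; [lra|].
  assert (0 <= iter1 (S j) g n) by (apply iter1_nonneg; auto). lra.
Qed.

Lemma Biter_upper j q n : (2 <= n)%nat ->
  Biter j (S q) one n <= INR (j + 2) - (Biter j (S q) one 2%nat - Biter j q one 2%nat) / 2.
Proof.
  intros Hn. pose proof (invariant j (Biter j q one) n ltac:(lia)) as HI.
  change (Biter j (S q) one) with (Bop j (Biter j q one)).
  rewrite Biter_1 in HI. change (one 1%nat) with 1 in HI.
  assert (Hnn : forall k, (1 <= k)%nat -> 0 <= Biter j q one k).
  { intros k Hk. pose proof (Biter_one_ge1 j q k Hk). lra. }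
  assert (HR : Rs (fun k => Biter j q one k - Bop j (Biter j q one) k) n <=
               Rs (fun k => Biter j q one k - Bop j (Biter j q one) k) 2%nat).
  { apply Rs_le2; auto. intros k Hk. pose proof (Biter_one_incr j q k ltac:(lia)) as Hi. cbn [Biter] in Hi. lra. }
  rewrite Rs_2 in HR.
  assert (0 <= (Bop j (Biter j q one) n + sumc j (Biter j q one) n) / INR n).
  { apply Rmult_le_pos; [|left; apply Rinv_0_lt_compat, lt_0_INR; lia].
    assert (0 <= Bop j (Biter j q one) n) by (apply Bop_nonneg; auto).
    assert (0 <= sumc j (Biter j q one) n) by (apply sumc_nonneg; [auto| lia]).
    lra. }
  lra.
Qed.

Lemma sqrt_step n : 2 * sqrt (INR n) + sqrt (INR (S n)) / INR (S n) ^ 1 <= 2 * sqrt (INR (S n)).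
Proof.
  pose proof (pos_INR n) as Hn. rewrite pow_1.
  assert (Hb : 0 < sqrt (INR (S n))) by (apply sqrt_lt_R0, INR_S_pos).
  assert (Ha : 0 <= sqrt (INR n)) by apply sqrt_pos.
  pose proof (sqrt_sqrt (INR n) Hn) as Ea.
  pose proof (sqrt_sqrt (INR (S n)) (Rlt_le _ _ (INR_S_pos n))) as Eb.
  rewrite S_INR in Eb, Hb |- *.
  set (a := sqrt (INR n)) in *. set (b := sqrt (INR n + 1)) in *.
  assert (Hab : 2 * a * b <= 2 * a * a + 1).
  { assert (H4 : (2*a*b) * (2*a*b) = 4 * (a*a) * (b*b)) by ring.
    rewrite Eb, <- Ea in H4.
    nra. }
  replace (b / (INR n + 1)) with (1 / b) by (rewrite <- Eb; field; lra).
  apply (Rmult_le_reg_r b); [lra|]. field_simplify; [|lra]. nra.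
Qed.

Lemma Aop_sqrt C g n : 0 <= C -> (forall k, (1 <= k)%nat -> g k <= C * sqrt (INR k)) ->
  Aop 1 g n <= 2 * C * sqrt (INR n).
Proof.
  intros HC H. induction n.
  - simpl. rewrite sqrt_0. lra.
  - rewrite Aop_S. pose proof (sqrt_step n) as Hs.
    assert (g (S n) / INR (S n) ^ 1 <= C * (sqrt (INR (S n)) / INR (S n) ^ 1)).
    { unfold Rdiv. rewrite <- Rmult_assoc. apply Rmult_le_compat_r; [|apply H; lia].
      left; apply Rinv_0_lt_compat, pow_lt, INR_S_pos. }
    nra.
Qed.

Lemma iter1_sqrt C g i n : 0 <= C -> (forall k, (1 <= k)%nat -> g k <= C * sqrt (INR k)) ->
  (1 <= n)%nat -> iter1 i g n <= 2 ^ i * C * sqrt (INR n).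
Proof.
  intros HC H. revert n; induction i; intros n Hn; cbn [iter1].
  - rewrite pow_O, Rmult_1_l. auto.
  - replace (2 ^ S i * C) with (2 * (2 ^ i * C)) by (simpl; ring).
    apply Aop_sqrt; [apply Rmult_le_pos; [apply pow_le; lra|auto]|]. auto.
Qed.

Lemma sumc_sqrt C g j n : 0 <= C -> (forall k, (1 <= k)%nat -> g k <= C * sqrt (INR k)) ->
  (1 <= n)%nat -> sumc j g n <= INR j * 2 ^ j * C * sqrt (INR n).
Proof.
  intros HC H Hn. induction j; cbn [sumc].
  - simpl. lra.
  - pose proof (iter1_sqrt C g (S j) n HC H Hn).
    assert (0 <= 2 ^ j) by (apply pow_le; lra).
    assert (HX : 0 <= 2 ^ j * C * sqrt (INR n)) by (apply Rmult_le_pos; [apply Rmult_le_pos; auto|apply sqrt_pos]).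
    assert (0 <= INR j * (2 ^ j * C * sqrt (INR n))) by (apply Rmult_le_pos; [apply pos_INR|exact HX]).
    replace ((INR (S j)) * 2 ^ S j * C * sqrt (INR n)) with
      (2 * (INR j * (2 ^ j * C * sqrt (INR n))) + 2 * (2 ^ j * C * sqrt (INR n))) by (rewrite S_INR; simpl; ring).
    replace (2 ^ S j * C * sqrt (INR n)) with (2 * (2 ^ j * C * sqrt (INR n))) in H0 by (simpl; ring).
    replace (INR j * 2 ^ j * C * sqrt (INR n)) with (INR j * (2 ^ j * C * sqrt (INR n))) in IHj by ring.
    lra.
Qed.

Lemma Fw_sqrt w n : List.Forall (fun k => (1 <= k)%nat) w -> (1 <= n)%nat -> Fw w n <= 2 ^ length w * sqrt (INR n).
Proof.
  intros Hw; revert n; induction Hw as [|e w He Hw IH]; intros n Hn.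
  - unfold Fw; simpl; unfold one. rewrite Rmult_1_l.
    rewrite <- sqrt_1. apply sqrt_le_1_alt. apply (le_INR 1) in Hn. simpl in Hn. lra.
  - rewrite F_cons. eapply Rle_trans; [apply Aop_exp_mono; [intros; apply F_nonneg; auto| exact He]|].
    replace (2 ^ length (e :: w)) with (2 * 2 ^ length w) by (simpl; ring).
    apply Aop_sqrt; [apply pow_le; lra|]. auto.
Qed.

Lemma Biter_super j q G n : (forall k, (1 <= k)%nat -> 0 <= G k) ->
  (forall k, (1 <= k)%nat -> Bop j G k <= G k) -> (1 <= n)%nat ->
  Biter j (S q) G n <= Biter j q G n.
Proof.
  intros H0 H; revert n; induction q; intros n Hn.
  - cbn [Biter]. auto.
  - change (Bop j (Biter j (S q) G) n <= Bop j (Biter j q G) n). apply Bop_mono. auto.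
Qed.

Lemma Biter_super_le j q G n : (forall k, (1 <= k)%nat -> 0 <= G k) ->
  (forall k, (1 <= k)%nat -> Bop j G k <= G k) -> (1 <= n)%nat ->
  Biter j q G n <= G n.
Proof.
  intros H0 H; revert n; induction q; intros n Hn; [cbn; lra|].
  eapply Rle_trans; [apply Biter_super; auto| auto].
Qed.

Lemma Biter_super_strict j q G : (forall k, (1 <= k)%nat -> 0 <= G k) ->
  (forall k, (1 <= k)%nat -> Bop j G k <= G k) -> Bop j G 2%nat < G 2%nat ->
  Biter j (S q) G 2%nat < Biter j q G 2%nat.
Proof.
  intros H0 H H2; induction q.
  - cbn [Biter]. auto.
  - change (Bop j (Biter j (S q) G) 2%nat < Bop j (Biter j q G) 2%nat). apply Bop_strict2; auto.
    intros; apply Biter_super; auto.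
Qed.

Lemma above_gt j rest q : List.Forall (fun k => (1 <= k)%nat) rest ->
  exists n, (2 <= n)%nat /\ INR (j + 2) < Biter j (S q) (Fw (1%nat :: rest)) n.
Proof.
  intros Hr. set (G := Fw (1%nat :: rest)).
  assert (Hw : List.Forall (fun k => (1 <= k)%nat) (1%nat :: rest)) by (constructor; auto).
  assert (HG0 : forall k, (1 <= k)%nat -> 0 <= G k) by (intros; apply F_nonneg; auto).
  assert (HGid : forall k, (1 <= k)%nat -> G k <= INR k) by (intros; apply F_le_id; auto).
  assert (HG1 : G 1%nat = 1) by apply F_1.
  assert (HGsup : forall k, (1 <= k)%nat -> Bop j G k <= G k).
  { intros k Hk. unfold Bop. eapply Rle_trans; [apply (Aop_mono 2 _ INR); intros; apply iter1_le_id; auto|].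
    rewrite (Aop_shift 1 INR k) by auto. unfold G. rewrite F_cons. apply Aop_mono.
    intros; apply F_ge1; auto. }
  assert (HG2 : Bop j G 2%nat < G 2%nat).
  { unfold Bop. rewrite Aop_2, iter1_1, HG1.
    pose proof (iter1_2_lt j G HG1 (F_2_lt _ Hw)).
    unfold G at 2. rewrite F_cons, Aop_2, F_1.
    pose proof (F_ge1 rest 2 ltac:(lia)). simpl pow. lra. }
  set (h0 := Biter j q G).
  assert (Hh0 : forall k, (1 <= k)%nat -> 0 <= h0 k) by (intros; apply Biter_nonneg; auto).
  assert (Hh0G : forall k, (1 <= k)%nat -> h0 k <= G k) by (intros; apply Biter_super_le; auto).
  set (d2 := h0 2%nat - Bop j h0 2%nat).
  assert (Hd2 : 0 < d2) by (unfold d2, h0; pose proof (Biter_super_strict j q G HG0 HGsup HG2); cbn [Biter] in H; lra).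
  set (C := 2 ^ length (1%nat :: rest)).
  assert (HC : 0 <= C) by (apply pow_le; lra).
  assert (Hh0C : forall k, (1 <= k)%nat -> h0 k <= C * sqrt (INR k)).
  { intros k Hk. eapply Rle_trans; [apply Hh0G; auto|]. apply Fw_sqrt; auto. }
  set (K := (2 ^ S j + INR j * 2 ^ j) * C).
  assert (HK : 0 <= K).
  { unfold K. apply Rmult_le_pos; auto. pose proof (pow_le 2 (S j)). pose proof (pow_le 2 j).
    pose proof (pos_INR j). nra. }
  destruct (INR_archimed 1 ((2 * K / d2) * (2 * K / d2)) ltac:(lra)) as [N HN].
  rewrite Rmult_1_r in HN.
  exists (N + 2)%nat. split; [lia|].
  set (n := (N + 2)%nat).
  assert (Hn1 : (1 <= n)%nat) by (unfold n; lia).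
  assert (HnN : INR N < INR n) by (apply lt_INR; unfold n; lia).
  assert (Hnpos : 0 < INR n) by (apply lt_0_INR; unfold n; lia).
  assert (Hsq : 0 < sqrt (INR n)) by (apply sqrt_lt_R0; auto).
  pose proof (sqrt_sqrt (INR n) (Rlt_le _ _ Hnpos)) as Esq.
  assert (Hbig : 2 * K / d2 < sqrt (INR n)).
  { destruct (Rlt_or_le (2 * K / d2) (sqrt (INR n))) as [Hl|Hl]; auto.
    exfalso. assert (0 <= 2 * K / d2) by (unfold Rdiv; apply Rmult_le_pos; [lra|left; apply Rinv_0_lt_compat; lra]).
    nra. }
  assert (HKd : K < d2 / 2 * sqrt (INR n)).
  { apply (Rmult_lt_compat_l (d2 / 2)) in Hbig; [|lra].
    replace (d2 / 2 * (2 * K / d2)) with K in Hbig by (field; lra). lra. }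
  pose proof (invariant j h0 n Hn1) as HI.
  assert (Eh01 : h0 1%nat = 1) by (unfold h0; rewrite Biter_1; auto).
  rewrite Eh01 in HI.
  assert (HR : Rs (fun k => h0 k - Bop j h0 k) 2%nat <= Rs (fun k => h0 k - Bop j h0 k) n).
  { apply Rs_ge2; [|unfold n; lia]. intros k Hk.
    pose proof (Biter_super j q G k HG0 HGsup ltac:(lia)). cbn [Biter] in H. fold h0 in H. lra. }
  rewrite Rs_2 in HR. fold d2 in HR.
  assert (HB1 : Bop j h0 n <= 2 ^ S j * C * sqrt (INR n)).
  { unfold Bop. eapply Rle_trans; [apply (Aop_exp_mono 1 2); [intros; apply iter1_nonneg; auto| lia]|].
    change (iter1 (S j) h0 n <= 2 ^ S j * C * sqrt (INR n)). apply iter1_sqrt; auto. }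
  assert (HS1 : sumc j h0 n <= INR j * 2 ^ j * C * sqrt (INR n)) by (apply sumc_sqrt; auto).
  assert (HBS : Bop j h0 n + sumc j h0 n <= K * sqrt (INR n)).
  { unfold K. replace ((2 ^ S j + INR j * 2 ^ j) * C * sqrt (INR n)) with
      (2 ^ S j * C * sqrt (INR n) + INR j * 2 ^ j * C * sqrt (INR n)) by ring. lra. }
  assert (HS : (Bop j h0 n + sumc j h0 n) / INR n <= K / sqrt (INR n)).
  { set (s := sqrt (INR n)) in *.
    replace (K / s) with (K * s / INR n) by (rewrite <- Esq; field; lra).
    unfold Rdiv. apply Rmult_le_compat_r; [left; apply Rinv_0_lt_compat; lra| exact HBS]. }
  assert (HKs : K / sqrt (INR n) < d2 / 2).
  { apply (Rmult_lt_reg_r (sqrt (INR n))); [auto|].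
    replace (K / sqrt (INR n) * sqrt (INR n)) with K by (field; lra). lra. }
  change (Biter j (S q) G n) with (Bop j h0 n).
  rewrite Rmult_1_r in HI. lra.
Qed.

Lemma classify j w : List.Forall (fun k => (1 <= k)%nat) w -> forall i, (i <= j)%nat ->
  (exists p, forall n, (1 <= n)%nat -> Fw w n <= iter1 i (Biter j p one) n) \/
  (exists q rest, List.Forall (fun k => (1 <= k)%nat) rest /\
     forall n, (1 <= n)%nat -> Fw w n = iter1 i (Biter j q (Fw (1%nat :: rest))) n).
Proof.
  intros Hw. induction Hw as [|e w He Hw IH]; intros i Hi.
  - left. exists 0%nat. intros n Hn. cbn [Biter]. unfold Fw; simpl; fold one.
    apply iter1_ge1; [unfold one; intros; lra| exact Hn].
  - assert (Hone : forall k, (1 <= k)%nat -> 1 <= one k) by (unfold one; intros; lra).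
    assert (Hwn : forall k, (1 <= k)%nat -> 0 <= Fw w k) by (intros; apply F_nonneg; auto).
    destruct i as [|i'].
    + destruct e as [|[|[|e]]]; [lia| | |].
      * right. exists 0%nat, w. split; auto.
      * destruct (IH j (le_n j)) as [[p Hp]|[q [rest [Hr Hq]]]].
        -- left. exists (S p). intros n Hn. cbn [iter1 Biter]. unfold Bop. rewrite F_cons.
           apply Aop_mono. auto.
        -- right. exists (S q), rest. split; auto. intros n Hn. cbn [iter1 Biter]. unfold Bop.
           rewrite F_cons. apply Aop_ext. auto.
      * left. exists 1%nat. intros n Hn. cbn [iter1 Biter]. unfold Bop. rewrite F_cons.
        eapply Rle_trans; [apply (Aop_exp_mono 3); [auto|lia]|].
        eapply Rle_trans; [apply (Aop_mono 3 _ INR); intros; apply F_le_id; auto|].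
        rewrite (Aop_shift 2 INR n) by auto. apply Aop_mono. intros; apply iter1_ge1; auto.
    + destruct e as [|[|e]]; [lia| |].
      * destruct (IH i' ltac:(lia)) as [[p Hp]|[q [rest [Hr Hq]]]].
        -- left. exists p. intros n Hn. cbn [iter1]. rewrite F_cons. apply Aop_mono. auto.
        -- right. exists q, rest. split; auto. intros n Hn. cbn [iter1]. rewrite F_cons. apply Aop_ext. auto.
      * left. exists 0%nat. intros n Hn. cbn [iter1 Biter]. rewrite F_cons.
        eapply Rle_trans; [apply (Aop_exp_mono 2); [auto|lia]|].
        eapply Rle_trans; [apply (Aop_mono 2 _ INR); intros; apply F_le_id; auto|].
        rewrite (Aop_shift 1 INR n) by auto. apply Aop_mono. intros; apply iter1_ge1; auto.
Qed.

Lemma sum_Aop k g m : sum_f_R0 (fun j => / INR (S j) ^ k * g (S j)) m = Aop k g (S m).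
Proof.
  induction m.
  - simpl sum_f_R0. rewrite Aop_S. simpl Aop. change (INR 1) with 1. unfold Rdiv. ring.
  - cbn [sum_f_R0]. rewrite IHm. rewrite (Aop_S k g (S m)). unfold Rdiv. ring.
Qed.

Lemma zs_Fw w : forall n, zs_tail w n = Fw w n.
Proof.
  induction w as [|k w IH]; intros n; [reflexivity|].
  destruct n as [|m]; [reflexivity|].
  cbn [zs_tail]. rewrite sum_Aop. rewrite F_cons. apply Aop_ext. auto.
Qed.

Lemma partial_eq k1 ks N : sum_n (zeta_star_term k1 ks) N = Fw (k1 :: ks) (S N).
Proof.
  rewrite sum_n_Reals. rewrite <- zs_Fw. reflexivity.
Qed.

Lemma Fw_le_iter w n : List.Forall (fun k => (1 <= k)%nat) w -> (1 <= n)%nat -> Fw w n <= iter1 (length w) one n.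
Proof.
  intros Hw; revert n; induction Hw as [|e w He Hw IH]; intros n Hn; [unfold Fw; simpl; lra|].
  rewrite F_cons. cbn [length iter1].
  eapply Rle_trans; [apply (Aop_exp_mono 1 e); [intros; apply F_nonneg; auto|exact He]|].
  apply Aop_mono. auto.
Qed.

Theorem theorem1p8 (k1 : nat) (ks : list nat) :
  (2 <= k1)%nat -> List.Forall (fun k => (1 <= k)%nat) ks ->
  ex_series (zeta_star_term k1 ks) /\
  forall z : Z, zeta_star k1 ks <> IZR z.
Proof.
  intros Hk1 Hks.
  set (w := k1 :: ks).
  assert (Hw : List.Forall (fun k => (1 <= k)%nat) w) by (constructor; [lia|auto]).
  set (u := fun N => Fw w (S N)).
  assert (Hu_incr : forall N, u N <= u (S N)).
  { intros N. unfold u. unfold w. rewrite !F_cons. apply Aop_incr. intros; apply F_nonneg; auto. }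
  set (j0 := length ks).
  assert (Hbound : forall N, u N <= INR (j0 + 2)).
  { intros N. unfold u, w. rewrite F_cons.
    eapply Rle_trans; [apply (Aop_exp_mono 2 k1); [intros; apply F_nonneg; auto|exact Hk1]|].
    eapply Rle_trans; [apply (Aop_mono 2 _ (iter1 j0 (Biter j0 0 one))); intros; apply Fw_le_iter; auto|].
    change (Aop 2 (iter1 j0 (Biter j0 0 one)) (S N)) with (Biter j0 1 one (S N)).
    destruct N as [|N].
    - rewrite Biter_1. unfold one. rewrite plus_INR. pose proof (pos_INR j0). change (INR 2) with 2. lra.
    - pose proof (Biter_upper j0 0 (S (S N)) ltac:(lia)).
      pose proof (Biter_one_strict j0 0). lra. }
  destruct (ex_finite_lim_seq_incr u (INR (j0 + 2)) Hu_incr Hbound) as [l Hl].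
  assert (Hser : is_series (zeta_star_term k1 ks) l).
  { assert (H2 : is_lim_seq (sum_n (zeta_star_term k1 ks)) l).
    { apply (is_lim_seq_ext u); [|exact Hl]. intros N. unfold u, w. rewrite partial_eq. reflexivity. }
    exact H2. }
  split; [exists l; exact Hser|].
  intros z Hz.
  assert (Hzl : zeta_star k1 ks = l) by (unfold zeta_star; apply is_series_unique; exact Hser).
  rewrite Hzl in Hz.
  assert (Hge : forall N, u N <= l) by (apply is_lim_seq_incr_compare; auto).
  assert (Hks2 : Fw ks 2%nat < 2) by (apply F_2_lt; auto).
  assert (Hks2' : 1 <= Fw ks 2%nat) by (apply F_ge1; lia).
  assert (Hpk : 4 <= 2 ^ k1).
  { replace 4 with (2 ^ 2) by ring. apply Rle_pow; [lra|exact Hk1]. }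
  assert (Hw2 : Fw w 2%nat < 3 / 2 /\ 1 < Fw w 2%nat).
  { unfold w. rewrite F_cons, Aop_2, F_1.
    assert (Fw ks 2%nat / 2 ^ k1 < 1/2 /\ 0 < Fw ks 2%nat / 2 ^ k1).
    { split.
      - apply (Rmult_lt_reg_r (2 ^ k1)); [lra|]. unfold Rdiv. rewrite Rmult_assoc, Rinv_l by lra. nra.
      - apply Rdiv_lt_0_compat; lra. }
    lra. }
  assert (Hl1 : 1 < l) by (pose proof (Hge 1%nat); unfold u in H; lra).
  rewrite Hz in Hl1. apply lt_IZR in Hl1.
  set (m := Z.to_nat z). set (j := (m - 2)%nat).
  assert (Hjz : INR (j + 2) = IZR z).
  { replace (j + 2)%nat with m by (unfold j, m; lia).
    rewrite INR_IZR_INZ. unfold m. rewrite Z2Nat.id by lia. reflexivity. }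
  destruct (classify j w Hw 0 (Nat.le_0_l j)) as [[p Hp]|[q [rest [Hr Hq]]]].
  - cbn [iter1] in Hp.
    set (gap := Biter j (S p) one 2%nat - Biter j p one 2%nat).
    assert (Hgap : 0 < gap) by (unfold gap; pose proof (Biter_one_strict j p); lra).
    assert (HuB : forall N, u N <= INR (j + 2) - gap / 2).
    { intros N. eapply Rle_trans; [apply Hu_incr|]. unfold u.
      eapply Rle_trans; [apply Hp; lia|].
      eapply Rle_trans; [apply Biter_one_incr; lia|].
      apply Biter_upper. lia. }
    pose proof (is_lim_seq_le u (fun _ => INR (j + 2) - gap / 2) l (INR (j + 2) - gap / 2) HuB Hl
      (is_lim_seq_const _)) as Hle.
    simpl in Hle. rewrite Hz in Hle. lra.
  - cbn [iter1] in Hq. destruct q as [|q].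
    + cbn [Biter] in Hq. specialize (Hq 2%nat ltac:(lia)).
      rewrite F_cons, Aop_2, F_1 in Hq.
      assert (1 <= Fw rest 2%nat) by (apply F_ge1; lia). simpl pow in Hq. lra.
    + destruct (above_gt j rest q Hr) as [n [Hn Hgt]].
      rewrite <- Hq in Hgt by lia.
      destruct n as [|n]; [lia|].
      pose proof (Hge n) as Hgen. unfold u in Hgen. rewrite Hz in Hgen. lra.
Qed.
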